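(* Let $X$ be the vertex set of a connected simplicial graph with bounded geometry, equipped with the shortest path metric, which is $\delta$-hyperbolic, and fix $e\in X$ and $p\geq 1$. For $x\in X$, $k\in\mathbb{N}$, $n\in\mathbb{N}\setminus\{0\}$, let $F_{x,k,n}$ be the set of all points of $X\setminus B(e;3\delta)$ lying on $g([n,2n])$ for some geodesic $g$ from some $y$ with $d(x,y)\leq k$ to $e$ (parametrised by arc length starting at $y$), let $F(x,k,n)\in\ell^p(X)$ be its characteristic function, and set $H(x,n)=\frac{1}{n}\sum_{0\leq k\leq n/4}F(x,k,n)$. Then $\|H(x,n)\|_p^p\preceq n$ for all $x\in X$, $n\geq 1$, and $\|H(x,n)\|_p^p\asymp n$ for all $x,n$ with $d(x,e)\geq 2n$.
   Context: Bounded geometry: for every $r$ there is a uniform bound on the cardinality of balls of radius $r$. $\delta$-hyperbolicity in the Rips sense. $A\preceq B$ means there is a constant $C$ (independent of $x,n$) with $A\leq CB+C$; $A\asymp B$ means $A\preceq B$ and $B\preceq A$. *)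

(* Defs.v *)
From HB Require Import structures.
From mathcomp Require Import all_boot all_order all_algebra.
From mathcomp Require Import all_classical all_reals all_analysis.
Set Implicit Arguments. Unset Strict Implicit. Unset Printing Implicit Defensive.
Import Order.TTheory GRing.Theory Num.Theory.
Local Open Scope classical_set_scope.
Local Open Scope ring_scope.

Section Graphs.
Variable X : choiceType.

Definition simplicial (adj : X -> X -> Prop) : Prop :=
  (forall x y, adj x y -> adj y x) /\ (forall x, ~ adj x x).

Definition walk (adj : X -> X -> Prop) (x y : X) (L : nat) : Prop :=
  exists w : nat -> X, w 0%N = x /\ w L = y /\
    forall i, (i < L)%N -> adj (w i) (w i.+1).

Definition connected_graph (adj : X -> X -> Prop) : Prop :=
  forall x y, exists L, walk adj x y L.

Definition path_metric (adj : X -> X -> Prop) (d : X -> X -> nat) : Prop :=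
  forall x y, walk adj x y (d x y) /\ (forall L, walk adj x y L -> (d x y <= L)%N).

Definition bounded_geometry (d : X -> X -> nat) : Prop :=
  forall r : nat, exists N : nat, forall x : X,
    exists s : seq X, (size s <= N)%N /\ (forall y, (d x y <= r)%N -> y \in s).

Definition natdist (i j : nat) : nat := (i - j + (j - i))%N.

Definition geodesic (d : X -> X -> nat) (g : nat -> X) (L : nat) (x y : X) : Prop :=
  g 0%N = x /\ g L = y /\ L = d x y /\
  forall i j, (i <= L)%N -> (j <= L)%N -> d (g i) (g j) = natdist i j.

Definition on_geod (g : nat -> X) (L : nat) (z : X) : Prop :=
  exists t, (t <= L)%N /\ g t = z.

Definition rips_hyperbolic {R : realType} (d : X -> X -> nat) (delta : R) : Prop :=
  forall (a b c : X) (g1 g2 g3 : nat -> X),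
    geodesic d g1 (d a b) a b -> geodesic d g2 (d b c) b c ->
    geodesic d g3 (d c a) c a ->
    forall t, (t <= d a b)%N ->
      exists z, (on_geod g2 (d b c) z \/ on_geod g3 (d c a) z) /\
                ((d (g1 t) z)%:R <= delta).

Definition Fset {R : realType} (d : X -> X -> nat) (delta : R) (e x : X) (k n : nat)
  : set X :=
  [set z | ~ ((d e z)%:R <= 3 * delta) /\
     exists (y : X) (g : nat -> X), (d x y <= k)%N /\ geodesic d g (d y e) y e /\
       exists t, (n <= t <= n.*2)%N /\ (t <= d y e)%N /\ g t = z].

Definition Hfun {R : realType} (d : X -> X -> nat) (delta : R) (e x : X) (n : nat)
  : X -> R :=
  fun z => n%:R^-1 * \sum_(0 <= k < (n %/ 4).+1) \1_(Fset d delta e x k n) z.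

Definition Hnormp {R : realType} (d : X -> X -> nat) (delta : R) (e x : X) (n : nat)
  (p : R) : \bar R :=
  (\esum_(z in [set: X]) ((Hfun d delta e x n z) `^ p)%:E)%E.

End Graphs.

(* Main.v *)
Require Import Defs.
From HB Require Import structures.
From mathcomp Require Import all_boot all_order all_algebra.
From mathcomp Require Import all_classical all_reals all_analysis.
From mathcomp Require Import zify.
From mathcomp.algebra_tactics Require Import ring lra.
Set Implicit Arguments. Unset Strict Implicit. Unset Printing Implicit Defensive.
Import Order.TTheory GRing.Theory Num.Theory.
Local Open Scope classical_set_scope.
Local Open Scope ring_scope.

Lemma walk_cat (X : choiceType) (adj : X -> X -> Prop) x y z L1 L2 :
  walk adj x y L1 -> walk adj y z L2 -> walk adj x z (L1 + L2).
Proof.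
move=> [w1 [h10 [h1L h1]]] [w2 [h20 [h2L h2]]].
exists (fun i => if (i <= L1)%N then w1 i else w2 (i - L1)%N).
split; first by rewrite leq0n.
split.
  case: ifPn => H.
    have E : L2 = 0%N by lia.
    by move: h2L; rewrite E addn0 h1L -h20 => ->.
  by rewrite addKn.
move=> i Hi.
case: (ltngtP i L1) => Hc.
- by apply: h1.
-   have -> : (i.+1 - L1 = (i - L1).+1)%N by lia.
  apply: h2; lia.
- subst i.
  rewrite h1L -h20 (_ : (L1.+1 - L1 = 1)%N); last lia.
  apply: h2; lia.
Qed.

Lemma walk_rev (X : choiceType) (adj : X -> X -> Prop) x y L :
  (forall a b, adj a b -> adj b a) -> walk adj x y L -> walk adj y x L.
Proof.
move=> Hs [w [h0 [hL h]]].
exists (fun i => w (L - i)%N); split; first by rewrite subn0.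
split; first by rewrite subnn.
move=> i Hi; apply: Hs.
have -> : (L - i = (L - i.+1).+1)%N by lia.
apply: h; lia.
Qed.

Lemma walk_sub (X : choiceType) (adj : X -> X -> Prop) (w : nat -> X) L i j :
  (forall k, (k < L)%N -> adj (w k) (w k.+1)) -> (i <= j)%N -> (j <= L)%N ->
  walk adj (w i) (w j) (j - i).
Proof.
move=> h Hij HjL.
exists (fun k => w (i + k)%N); split; first by rewrite addn0.
split; first by rewrite subnKC.
move=> k Hk; rewrite addnS; apply: h; lia.
Qed.

Lemma d_le (X : choiceType) (adj : X -> X -> Prop) d x y L :
  path_metric adj d -> walk adj x y L -> (d x y <= L)%N.
Proof. by move=> P W; apply: (P x y).2. Qed.

Lemma d_refl (X : choiceType) (adj : X -> X -> Prop) d x :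
  path_metric adj d -> d x x = 0%N.
Proof.
move=> P; apply/eqP; rewrite -leqn0; apply: (d_le P).
by exists (fun _ => x); split=> //; split=> // i; rewrite ltn0.
Qed.

Lemma d_sym (X : choiceType) (adj : X -> X -> Prop) d x y :
  simplicial adj -> path_metric adj d -> d x y = d y x.
Proof.
move=> [Hs _] P; apply/eqP; rewrite eqn_leq; apply/andP; split;
  apply: (d_le P); apply: walk_rev => //; exact: (P _ _).1.
Qed.

Lemma d_tri (X : choiceType) (adj : X -> X -> Prop) d x y z :
  path_metric adj d -> (d x z <= d x y + d y z)%N.
Proof.
move=> P; apply: (d_le P); apply: walk_cat; [exact: (P _ _).1|exact: (P _ _).1].
Qed.

Lemma geod_ex (X : choiceType) (adj : X -> X -> Prop) d a b :
  simplicial adj -> path_metric adj d -> exists g, geodesic d g (d a b) a b.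
Proof.
move=> S P; have [[w [h0 [hL h]]] _] := P a b.
exists w; split=> //; split=> //; split=> //.
have key : forall i j, (i <= j)%N -> (j <= d a b)%N -> d (w i) (w j) = (j - i)%N.
  move=> i j Hij HjL; apply/eqP; rewrite eqn_leq; apply/andP; split.
    exact: (d_le P (walk_sub h Hij HjL)).
  have t1 := @d_tri _ _ d a (w i) (w j) P.
  have t2 := @d_tri _ _ d a (w j) b P.
  have t3 : (d a (w i) <= i)%N.
    rewrite -{1}h0 -[X in (_ <= X)%N]subn0; apply: (d_le P); apply: (walk_sub h) => //; lia.
  have t4 : (d (w j) b <= d a b - j)%N.
    by rewrite -{1}hL; apply: (d_le P); apply: (walk_sub h) => //.
  lia.
move=> i j Hi Hj; rewrite /natdist.
case: (leqP i j) => Hij.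
  by rewrite key //; lia.
by rewrite (@d_sym _ _ d (w i) (w j) S P) key //; lia.
Qed.
Lemma sum_seq_le (R : realType) (T : eqType) (s : seq T) (f : T -> R) M :
  (forall z, f z <= M) -> \sum_(z <- s) f z <= (size s)%:R * M.
Proof.
move=> h; elim: s => [|a s IH]; first by rewrite big_nil mul0r.
by rewrite big_cons /= -addn1 natrD mulrDl mul1r addrC lerD.
Qed.

Lemma sum_seq_ge (R : realType) (T : eqType) (s : seq T) (f : T -> R) m :
  (forall z, z \in s -> m <= f z) -> (size s)%:R * m <= \sum_(z <- s) f z.
Proof.
elim: s => [|a s IH] h; first by rewrite big_nil mul0r.
rewrite big_cons /= -addn1 natrD mulrDl mul1r addrC lerD //.
  by apply: h; rewrite mem_head.
by apply: IH => z zs; apply: h; rewrite inE zs orbT.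
Qed.

Lemma esum_le_seq (R : realType) (T : choiceType) (f : T -> R) (L : seq T) M :
  (forall z, 0 <= f z) -> (forall z, f z <= M) -> 0 <= M ->
  (forall z, z \notin L -> f z = 0) ->
  (\esum_(z in [set: T]) (f z)%:E <= ((size L)%:R * M)%:E)%E.
Proof.
move=> f0 fM M0 fL.
have -> : (\esum_(z in [set: T]) (f z)%:E = \esum_(z in [set` undup L]) (f z)%:E)%E.
  rewrite [RHS]esum_mkcond; apply: eq_esum => z _.
  rewrite mem_setE mem_undup; case: ifPn => // /fL ->; done.
rewrite esum_fset; last 2 first.
- exact: finite_seq.
- by move=> i _; rewrite lee_fin.
rewrite -fsbig_seq ?undup_uniq // sumEFin lee_fin.
apply: (le_trans (sum_seq_le _ fM)).
by rewrite ler_wpM2r // ler_nat size_undup.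
Qed.

Lemma esum_ge_seq (R : realType) (T : choiceType) (f : T -> R) (s : seq T) :
  (forall z, 0 <= f z) -> uniq s ->
  ((\sum_(z <- s) f z)%:E <= \esum_(z in [set: T]) (f z)%:E)%E.
Proof.
move=> f0 us; apply: esum_ge; exists [set` s]; first by split => //; exact: finite_seq.
by rewrite -fsbig_seq // sumEFin.
Qed.
Lemma Hfun_ge0 (R : realType) (X : choiceType) (d : X -> X -> nat) (delta : R) (e x : X) n z :
  0 <= Hfun d delta e x n z.
Proof.
by rewrite /Hfun mulr_ge0 // ?invr_ge0 // sumr_ge0.
Qed.

Lemma Hfun_le2 (R : realType) (X : choiceType) (d : X -> X -> nat) (delta : R) (e x : X) n z :
  (0 < n)%N -> Hfun d delta e x n z <= 2.
Proof.
move=> n0; rewrite /Hfun.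
have S : \sum_(0 <= k < (n %/ 4).+1) \1_(Fset d delta e x k n) z <= ((n %/ 4).+1)%:R :> R.
  apply: (@le_trans _ _ (\sum_(0 <= k < (n %/ 4).+1) (1:R))).
    by apply: ler_sum => k _; rewrite indicE lern1 leq_b1.
  by rewrite sumr_const_nat subn0.
have np : (0 : R) < n%:R by rewrite ltr0n.
rewrite ler_pdivrMl //; apply: (le_trans S).
rewrite -natrM ler_nat; lia.
Qed.

Lemma Hfun_ge (R : realType) (X : choiceType) (d : X -> X -> nat) (delta : R) (e x : X) n z :
  (0 < n)%N -> (forall k, Fset d delta e x k n z) -> 4^-1 <= Hfun d delta e x n z.
Proof.
move=> n0 hF; rewrite /Hfun.
have -> : \sum_(0 <= k < (n %/ 4).+1) \1_(Fset d delta e x k n) z = ((n %/ 4).+1)%:R :> R.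
  transitivity (\sum_(0 <= k < (n %/ 4).+1) (1:R)); last by rewrite sumr_const_nat subn0.
  apply: eq_bigr => k _; rewrite indicE.
  by have -> : z \in Fset d delta e x k n by rewrite inE; exact: hF.
have np : (0 : R) < n%:R by rewrite ltr0n.
rewrite ler_pdivlMl // ler_pdivrMr // -natrM ler_nat; lia.
Qed.

Lemma size_flatten_le (T U : Type) (f : U -> seq T) (s : seq U) N :
  (forall u, (size (f u) <= N)%N) -> (size (flatten (map f s)) <= size s * N)%N.
Proof.
move=> h; elim: s => [|a s IH] //=.
rewrite size_cat mulSn leq_add //.
Qed.

Lemma key_upper (R : realType) (X : choiceType) (adj : X -> X -> Prop)
  (d : X -> X -> nat) (delta : R) (e : X) (R0 : nat)
  (ball : X -> seq X) (G2 : X -> nat -> X) :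
  simplicial adj -> path_metric adj d -> 0 <= delta -> rips_hyperbolic d delta ->
  6 * delta <= R0%:R ->
  (forall c y, (d c y <= R0)%N -> y \in ball c) ->
  (forall x, geodesic d (G2 x) (d e x) e x) ->
  forall x n z k, (0 < n)%N -> (k <= n %/ 4)%N -> Fset d delta e x k n z ->
  z \in ball x ++ flatten [seq ball (G2 x s) | s <- iota (d e x - (3 * n + R0)) (3 * n + R0).+1].
Proof.
move=> S P d0 Hyp hR0 hball hG2 x n z k n0 hk [_ [y [g [hxy [hg [t [/andP[ht1 ht2] [htL hgt]]]]]]]].
have [g3 hg3] := geod_ex x y S P.
have [w [hw hwz]] := Hyp y e x g (G2 x) g3 hg (hG2 x) hg3 t htL.
subst z.
have [hg0 [hgL [_ hgd]]] := hg.
have dyz : d y (g t) = t.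
  by rewrite -{1}hg0 hgd //; rewrite /natdist; lia.
have dxz : (d x (g t) <= k + t)%N.
  by apply: (leq_trans (@d_tri _ _ d x y (g t) P)); rewrite dyz leq_add2r.
have k4 : (4 * k <= n)%N by lia.
case: hw => [[s [hs hsw]]|[s [hs hsw]]].
-
  have [G0 [GL [_ Gd]]] := hG2 x.
  have dzw : (d (g t) w <= R0)%N.
    rewrite -(ler_nat R); apply: (le_trans hwz); lra.
  rewrite mem_cat; apply/orP; right.
  apply/flatten_mapP; exists s.
    have dwx : d w x = (d e x - s)%N.
      by rewrite -hsw -{2}GL Gd // /natdist; lia.
    have t3 := @d_tri _ _ d w (g t) x P.
    rewrite (@d_sym _ _ d (g t) x S P) in t3.
    rewrite (@d_sym _ _ d w (g t) S P) in t3.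
    have ht2' : (t <= 2 * n)%N by rewrite mul2n.
    rewrite mem_iota; lia.
  by apply: hball; rewrite hsw (@d_sym _ _ d w (g t) S P).
-
  have [g30 [g3L [_ g3d]]] := hg3.
  have dwy : (d w y <= k)%N.
    rewrite -hsw -g3L g3d // /natdist; lia.
  have t3 := @d_tri _ _ d y w (g t) P.
  rewrite dyz (@d_sym _ _ d y w S P) (@d_sym _ _ d w (g t) S P) in t3.
  have hr : (t%:R : R) <= (d w y)%:R + (d (g t) w)%:R by rewrite -natrD ler_nat.
  have hr1 : (n%:R : R) <= t%:R by rewrite ler_nat.
  have hr2 : ((d w y)%:R : R) <= k%:R by rewrite ler_nat.
  have hr3 : (4 * k%:R : R) <= n%:R by rewrite -natrM ler_nat.
  have ht2' : (t <= 2 * n)%N by rewrite mul2n.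
  have hr4 : ((d x (g t))%:R : R) <= 3 * n%:R.
    rewrite -natrM ler_nat; lia.
  have dxz' : (d x (g t) <= R0)%N by rewrite -(ler_nat R); lra.
  by rewrite mem_cat hball.
Qed.

Theorem lemma3p5 (R : realType) (X : choiceType) (adj : X -> X -> Prop)
  (d : X -> X -> nat) (delta : R) (e : X) (p : R) :
  simplicial adj -> connected_graph adj -> path_metric adj d ->
  bounded_geometry d -> 0 <= delta -> rips_hyperbolic d delta -> 1 <= p ->
  (exists C : R, forall (x : X) (n : nat), (0 < n)%N ->
      (Hnormp d delta e x n p <= (C * n%:R + C)%:E)%E) /\
  (exists C : R, forall (x : X) (n : nat), (0 < n)%N -> (n.*2 <= d x e)%N ->
      (Hnormp d delta e x n p <= (C * n%:R + C)%:E)%E /\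
      ((n%:R)%:E <= C%:E * Hnormp d delta e x n p + C%:E)%E).
Proof.
move=> S Cn P BG d0 Hyp p1.
have p0 : 0 <= p by apply: le_trans p1.
have pn0 : p != 0 by rewrite gt_eqF // (lt_le_trans ltr01 p1).
pose R0 := (Num.truncn (6 * delta)).+1.
have hR0 : 6 * delta <= R0%:R by apply/ltW/truncnS_gt.
have [N hN] := BG R0.
pose ball c := projT1 (cid (hN c)).
have hballs : forall c, (size (ball c) <= N)%N := fun c => (projT2 (cid (hN c))).1.
have hball : forall c y, (d c y <= R0)%N -> y \in ball c :=
  fun c => (projT2 (cid (hN c))).2.
pose G2 x := projT1 (cid (@geod_ex _ _ d e x S P)).
have hG2 : forall x, geodesic d (G2 x) (d e x) e x :=
  fun x => projT2 (cid (@geod_ex _ _ d e x S P)).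
pose Cu : R := (N * (R0 + 4))%:R * 2 `^ p.
have Cu0 : 0 <= Cu by rewrite mulr_ge0 // powR_ge0.
have upper : forall x n, (0 < n)%N ->
    (Hnormp d delta e x n p <= (Cu * n%:R + Cu)%:E)%E.
  move=> x n n0.
  pose L := ball x ++ flatten [seq ball (G2 x s) | s <- iota (d e x - (3 * n + R0)) (3 * n + R0).+1].
  have hsz : (size L <= N * (R0 + 4) * (n + 1))%N.
    rewrite size_cat.
    have := @size_flatten_le _ _ (fun s => ball (G2 x s)) (iota (d e x - (3 * n + R0)) (3 * n + R0).+1) N (fun u => hballs (G2 x u)).
    rewrite size_iota => h1; have := hballs x => h2; nia.
  rewrite /Hnormp; apply: (le_trans (@esum_le_seq R X (fun z => Hfun d delta e x n z `^ p) L (2 `^ p) _ _ _ _)).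
  - by move=> z; apply: powR_ge0.
  - move=> z; apply: ge0_ler_powR => //; rewrite ?nnegrE ?Hfun_ge0 //.
    exact: Hfun_le2.
  - exact: powR_ge0.
  - move=> z zL.
    suff -> : Hfun d delta e x n z = 0 by rewrite powR0.
    rewrite /Hfun big1_seq ?mulr0 // => k /andP[_]; rewrite mem_index_iota => /andP[_ hk].
    rewrite indicE; case: (boolP (z \in _)) => // /set_mem hz.
    have := @key_upper R X adj d delta e R0 ball G2 S P d0 Hyp hR0 hball hG2 x n z k n0.
    by rewrite -ltnS hk => /(_ isT hz); rewrite (negbTE zL).
  - rewrite lee_fin.
    apply: (@le_trans _ _ ((N * (R0 + 4) * (n + 1))%:R * 2 `^ p)).
      by rewrite ler_wpM2r ?powR_ge0 // ler_nat.
    rewrite /Cu natrM natrD; rewrite le_eqVlt; apply/orP; left; apply/eqP; ring.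
split; first by exists Cu.
pose K := (Num.truncn (3 * delta)).+1.
have hK : 3 * delta < K%:R by apply: truncnS_gt.
pose m : R := 4^-1 `^ p.
have m0 : 0 < m by rewrite powR_gt0.
pose C2 := Cu + m^-1 + K%:R.
have hC : Cu <= C2.
  have : 0 <= m^-1 by rewrite invr_ge0 ltW.
  have : (0:R) <= K%:R by [].
  rewrite /C2; lra.
exists C2 => x n n0 h2n.
split.
  apply: le_trans (upper x n n0) _; rewrite lee_fin.
  by apply: lerD => //; apply: ler_wpM2r.
have [g0 hg0] := @geod_ex _ _ d x e S P.
have [g00 [g0L [_ g0d]]] := hg0.
have h2n' : (2 * n <= d x e)%N by rewrite mul2n.
pose s := map (fun i => g0 (n + i)%N) (iota 0 (n - K)).
have us : uniq s.
  rewrite map_inj_in_uniq ?iota_uniq // => i j; rewrite !mem_iota => hi hj hij.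
  have := g0d (n + i)%N (n + j)%N; rewrite hij (@d_refl _ _ d _ P) /natdist => h.
  have := h ltac:(lia) ltac:(lia); lia.
have hin : forall z, z \in s -> forall k, Fset d delta e x k n z.
  move=> z /mapP [i hi ->] k; rewrite mem_iota in hi; split.
    have de : d e (g0 (n + i)%N) = (d x e - (n + i))%N.
      by rewrite -{1}g0L g0d /natdist; lia.
    have hKd : (K <= d e (g0 (n + i)%N))%N by rewrite de; lia.
    move=> hle; have : (K%:R : R) <= (d e (g0 (n + i)%N))%:R by rewrite ler_nat.
    lra.
  exists x, g0; split; first by rewrite (@d_refl _ _ d _ P).
  split => //; exists (n + i)%N; split; first by apply/andP; split; lia.
  split => //; lia.
have lowb : ((((n - K)%N)%:R * m)%:E <= Hnormp d delta e x n p)%E.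
  rewrite /Hnormp; apply: (le_trans _ (@esum_ge_seq R X (fun z => Hfun d delta e x n z `^ p) s (fun z => powR_ge0 _ _) us)).
  rewrite lee_fin -[X in X%:R * _](size_iota 0) -(size_map (fun i => g0 (n + i)%N)).
  apply: sum_seq_ge => z zs.
  apply: ge0_ler_powR => //; rewrite ?nnegrE ?Hfun_ge0 //.
  exact: Hfun_ge n0 (hin z zs).
have nK : (n%:R : R) <= (n - K)%N%:R + K%:R by rewrite -natrD ler_nat; lia.
have lo0 : (0 : R) <= (n - K)%N%:R * m by rewrite mulr_ge0 // ltW.
move: lowb; case: (Hnormp d delta e x n p) => [r| |] //.
- rewrite !lee_fin => hr.
  have r0 : 0 <= r by apply: le_trans hr.
  have h1 : (n - K)%N%:R <= m^-1 * r.
    by rewrite ler_pdivlMl ?invr_gt0 // mulrC.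
  have h2 : m^-1 * r <= C2 * r.
    apply: ler_wpM2r => //.
    have : (0:R) <= K%:R by [].
    have : 0 <= m^-1 by rewrite invr_ge0 ltW.
    rewrite /C2; lra.
  have hKC : (K%:R : R) <= C2.
    have : 0 <= m^-1 by rewrite invr_ge0 ltW.
    rewrite /C2; lra.
  lra.
- move=> _.
  have C20 : 0 < C2.
    have : 0 < m^-1 by rewrite invr_gt0.
    have : (0:R) <= K%:R by [].
    rewrite /C2; lra.
  by rewrite mulry gtr0_sg // mul1e addye // leey.
Qed.
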